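(* Let $p$ and $q$ be positive integers, let $m_1<m_2<\cdots<m_q$ be positive integers and let $v_1,\dots,v_q$ be positive integers. Let $A_n$ be the number of ways to tile an $n$-board using $v_i$ colours of $(1,p-1;m_i)$-combs for $i=1,\ldots,q$. Define $s_n$ by $s_n=v_1s_{n-m_1}+\cdots+v_qs_{n-m_q}+\delta_{n,0}$ for $n\ge 0$ and $s_n=0$ for $n<0$. Then for all $n\ge0$ and all $r=0,\ldots,p-1$, \[ A_{pn+r}=s_n^{p-r}s_{n+1}^r . \]
   Context: An $n$-board is the strip $[0,n]\times[0,1]$ divided into $n$ unit square cells. A $(w,g;m)$-comb is a tile consisting of a row of $m$ rectangles (teeth) of size $w\times 1$, consecutive teeth separated by a gap of width $g$; the gaps are not part of the tile and may be occupied by other tiles. A tiling of a board is a placement of translated (unrotated) copies of tiles so that the teeth cover the board exactly with no overlaps; tiles of the same shape but different colours are distinguished. $\delta_{i,j}$ equals $1$ if $i=j$ and $0$ otherwise. *)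

(* Defs.v *)
From mathcomp Require Import all_boot.
Set Implicit Arguments. Unset Strict Implicit. Unset Printing Implicit Defensive.

(* Combs (1, p-1; m_i): a tooth is one cell, consecutive
   teeth p apart.  Tile type i (0 <= i < q) has m i teeth and v i colours.
   A placed tile is (i, c, x): type i, colour c (< v i), leftmost tooth at
   cell x; it covers cells x, x+p, ..., x+(m i - 1)p.  Colours are encoded
   in 'I_(maxcol v) with the validity constraint c < v i. *)

Definition maxcol (q : nat) (v : 'I_q -> nat) : nat := \max_(i < q) v i.

Definition placement (q : nat) (v : 'I_q -> nat) (N : nat) : finType :=
  ('I_q * 'I_(maxcol v) * 'I_N)%type.

Definition covers (p q : nat) (m v : 'I_q -> nat) (N : nat)
    (t : placement v N) (j : nat) : bool :=
  let: (i, _, x) := t in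
  [&& (x <= j)%N, ((j - x) %% p == 0)%N & ((j - x) %/ p < m i)%N].

Definition valid (p q : nat) (m v : 'I_q -> nat) (N : nat)
    (t : placement v N) : bool :=
  let: (i, c, x) := t in
  ((c < v i)%N && (x + (m i).-1 * p < N)%N).

Definition is_tiling (p q : nat) (m v : 'I_q -> nat) (N : nat)
    (S : {set placement v N}) : bool :=
  [forall t in S, valid p m t] &&
  [forall j : 'I_N, #|[set t in S | covers p m t j]| == 1%N].

Definition A (p q : nat) (m v : 'I_q -> nat) (N : nat) : nat :=
  #|[set S : {set placement v N} | is_tiling p m S]|.

(* Main.v *)
Require Import Defs.
From mathcomp Require Import all_boot zify.
Set Implicit Arguments. Unset Strict Implicit. Unset Printing Implicit Defensive.

Section Tilings.
Variables (p q : nat) (m v : 'I_q -> nat) (N : nat).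
Hypothesis hp : 0 < p.
Hypothesis hm_pos : forall i, 0 < m i.

Definition tiles (D : pred nat) (S : {set placement v N}) : bool :=
  [forall t in S, valid p m t && [forall j : 'I_N, covers p m t j ==> D j]] &&
  [forall j : 'I_N, D j ==> (#|[set t in S | covers p m t j]| == 1)].
Definition T (D : pred nat) := #|[set S : {set placement v N} | tiles D S]|.

Lemma coversP i c (x : 'I_N) j : reflect (exists2 k, k < m i & j = x + k * p)
  (covers p m ((i, c, x) : placement v N) j).
Proof.
rewrite /covers; apply: (iffP and3P) => [[h1 /eqP h2 h3] | [k hk ->]].
  exists ((j - x) %/ p) => //.
  have := divn_eq (j - x) p; rewrite h2 addn0 => e.
  by rewrite -e subnKC.
by rewrite leq_addr addKn modnMl mulnK.
Qed.

Lemma card_cov (S : {set placement v N}) j :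
  #|[set t in S | covers p m t j]| = \sum_(t in S) covers p m t j.
Proof.
rewrite -sum1_card big_mkcond /= [RHS]big_mkcond /=.
apply: eq_bigr => t _; rewrite !inE; by case: (t \in S); case: covers.
Qed.

Lemma T_ext D D' : (forall j, D j = D' j) -> T D = T D'.
Proof.
move=> e; rewrite /T; apply: eq_card => S; rewrite !inE /tiles.
congr (_ && _).
  apply: eq_forallb => t; congr (_ ==> (_ && _)).
  by apply: eq_forallb => j; rewrite e.
by apply: eq_forallb => j; rewrite e.
Qed.


Lemma mk_lt c0 (h : c0 < N) (i : 'I_q) : c0 - (m i).-1 * p < N.
Proof. exact: leq_ltn_trans (leq_subr _ _) h. Qed.

Definition mk c0 (h : c0 < N) (ic : 'I_q * 'I_(maxcol v)) : placement v N :=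
  (ic.1, ic.2, Ordinal (mk_lt h ic.1)).

Definition adm (D : pred nat) c0 (h : c0 < N) (ic : 'I_q * 'I_(maxcol v)) : bool :=
  [&& ic.2 < v ic.1, (m ic.1).-1 * p <= c0 &
      [forall j : 'I_N, covers p m (mk h ic) j ==> D j]].

Definition Dm (D : pred nat) c0 (h : c0 < N) ic : pred nat :=
  fun j => D j && ~~ covers p m (mk h ic) j.

Lemma mk_cov c0 (h : c0 < N) ic : (m ic.1).-1 * p <= c0 -> covers p m (mk h ic) c0.
Proof.
move=> hl; case: ic hl => i c /= hl; apply/(@coversP i c (Ordinal (mk_lt h i)) c0); exists (m i).-1.
  by rewrite prednK ?hm_pos.
by rewrite /= subnK.
Qed.

Lemma mk_inj c0 (h : c0 < N) : injective (mk h).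
Proof. by case=> [i c] [i' c'] [-> ->]. Qed.

Lemma notin_mk D c0 (h : c0 < N) ic S' : adm D h ic -> tiles (Dm D h ic) S' -> mk h ic \notin S'.
Proof.
case/and3P=> _ hl _ /andP[/forall_inP hS _]; apply/negP => /hS /andP[_ /forallP /(_ (Ordinal h))].
move=> /implyP /(_ (@mk_cov c0 h ic hl)); by rewrite /Dm mk_cov // andbF.
Qed.


Lemma add_tiles D c0 (h : c0 < N) ic S' :
  adm D h ic -> tiles (Dm D h ic) S' -> tiles D (mk h ic |: S').
Proof.
move=> hadm hS'; have hn := notin_mk hadm hS'.
move: hadm hS' => /and3P[hc hl /forallP hcov] /andP[/forall_inP hS /forallP hC].
apply/andP; split.
  apply/forall_inP => t; rewrite in_setU1 => /orP[/eqP -> | ht].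
    apply/andP; split; last by apply/forallP.
    by rewrite /valid /mk /= subnK // hc h.
  case/andP: (hS t ht) => -> /forallP hj; apply/forallP => j.
  apply/implyP => /(implyP (hj j)) /andP[] //.
apply/forallP => j; apply/implyP => hDj.
rewrite card_cov big_setU1 //.
case hmj: (covers p m (mk h ic) j).
  rewrite big1 // => t ht; case htj: (covers p m t j) => //.
  have := implyP (forallP (proj2 (andP (hS t ht))) j) htj.
  by rewrite /Dm hmj andbF.
rewrite /= add0n -card_cov; apply: (implyP (hC j)); by rewrite /Dm hDj hmj.
Qed.

Lemma rem_tiles D c0 (h : c0 < N) ic S :
  tiles D S -> mk h ic \in S -> tiles (Dm D h ic) (S :\ mk h ic).
Proof.
move=> /andP[/forall_inP hS /forallP hC] hin.
have key : forall j : 'I_N, D j ->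
    covers p m (mk h ic) j + \sum_(t in S :\ mk h ic) covers p m t j = 1.
  move=> j hj; have := implyP (hC j) hj; rewrite card_cov (big_setD1 _ hin) /=.
  by move/eqP.
apply/andP; split.
  apply/forall_inP => t; rewrite in_setD1 => /andP[htm ht].
  case/andP: (hS t ht) => -> /forallP hj /=; apply/forallP => j.
  apply/implyP => htj; have hDj := implyP (hj j) htj.
  rewrite /Dm hDj andTb; apply/negP => hmj.
  have := key j hDj; rewrite hmj.
  rewrite (big_setD1 t (A := S :\ mk h ic) (F := fun u => nat_of_bool (covers p m u j))); last by rewrite in_setD1 htm.
  by rewrite htj.
apply/forallP => j; apply/implyP => /andP[hDj hmj].
rewrite card_cov; have := key j hDj; by rewrite (negbTE hmj) add0n => ->.
Qed.


Lemma uniq_ic (D : pred nat) c0 (h : c0 < N) (S : {set placement v N}) : D c0 -> ~~ D (c0 + p) -> tiles D S ->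
  exists ic0, forall ic, (adm D h ic && (mk h ic \in S)) = (ic == ic0).
Proof.
move=> hD0 hDn /andP[/forall_inP hS /forallP hC].
have /cards1P [t0 E] := implyP (hC (Ordinal h)) hD0.
have : t0 \in [set t in S | covers p m t (Ordinal h)] by rewrite E set11.
rewrite inE => /andP[ht0 hc0].
have uniq0 : forall t, t \in S -> covers p m t c0 -> t = t0.
  move=> t ht htc; apply/set1P; rewrite -E inE ht; exact: htc.
move: t0 E ht0 hc0 uniq0 => [[i c] x] E ht0 hc0 uniq0.
case/andP: (hS _ ht0) => /andP[hc hx] /forallP hcov.
case/coversP: hc0 => k hk /= hkx.
have hk' : k = (m i).-1.
  apply/eqP; rewrite eqn_leq -ltnS prednK ?hm_pos // hk /=.
  rewrite leqNgt; apply/negP => hlt.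
  have e1 : c0 + p = x + k.+1 * p by rewrite hkx mulSnr addnA.
  have hlt2 : c0 + p < N.
    rewrite e1; apply: leq_ltn_trans hx; by rewrite leq_add2l leq_mul2r hlt orbT.
  have hc2 : covers p m ((i, c, x) : placement v N) (c0 + p).
    apply/coversP; exists k.+1 => //.
    by rewrite -(prednK (hm_pos i)) ltnS.
  by have := implyP (hcov (Ordinal hlt2)) hc2; rewrite (negbTE hDn).
subst k.
exists (i, c).
have e0 : mk h (i, c) = (i, c, x).
  by congr (_, _); apply: val_inj; rewrite /= hkx addnK.
move=> ic; apply/idP/idP.
  case/andP => /and3P[_ hl _] hin.
  have := uniq0 _ hin (@mk_cov c0 h ic hl); rewrite -e0 => /mk_inj ->.
  exact: eqxx.
move/eqP ->; rewrite e0 ht0 andbT; apply/and3P; split => //.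
  by rewrite hkx leq_addl.
by rewrite e0; apply/forallP.
Qed.


Lemma removal (D : pred nat) c0 (h : c0 < N) : D c0 -> ~~ D (c0 + p) ->
  T D = \sum_(ic | adm D h ic) T (Dm D h ic).
Proof.
move=> hD0 hDn.
rewrite /T -sum1dep_card.
rewrite (eq_bigr (fun S : {set placement v N} => \sum_(ic | adm D h ic && (mk h ic \in S)) 1)); last first.
  move=> S hS; have [ic0 e] := uniq_ic h hD0 hDn hS; by rewrite (big_pred1 ic0 e).
rewrite (exchange_big_dep (adm D h)) /=; last by move=> S ic _ /andP[].
apply: eq_bigr => ic hadm.
rewrite sum1dep_card.
have -> : [set S | tiles D S && (adm D h ic && (mk h ic \in S))] =
    (fun S' => mk h ic |: S') @: [set S' | tiles (Dm D h ic) S'].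
  apply/setP => S; rewrite inE hadm /=; apply/idP/imsetP.
    case/andP => hS hin; exists (S :\ mk h ic); first by rewrite inE rem_tiles.
    by rewrite setD1K.
  case=> S' hS' ->; rewrite inE in hS'; by rewrite add_tiles // setU11.
apply: card_in_imset => S1 S2; rewrite !inE => h1 h2 e.
have n1 := notin_mk hadm h1; have n2 := notin_mk hadm h2.
by rewrite -(setU1K n1) e setU1K.
Qed.


Lemma modp_eq r k : r < p -> (r + k * p) %% p = r.
Proof. by move=> hr; rewrite addnC modnMDl modn_small. Qed.
Lemma divp_eq r k : r < p -> (r + k * p) %/ p = k.
Proof. by move=> hr; rewrite addnC divnMDl // divn_small // addn0. Qed.

Definition Dr (f : nat -> nat) : pred nat := fun j => j %/ p < f (j %% p).

Lemma covers_mk (f : nat -> nat) (r0 : 'I_p) (h : r0 + (f r0).-1 * p < N)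
   (i : 'I_q) c j : 0 < f r0 -> m i <= f r0 ->
  covers p m (mk h (i, c)) j = (j %% p == r0) && (f r0 - m i <= j %/ p < f r0).
Proof.
move=> hf hmf.
have ex : r0 + (f r0).-1 * p - (m i).-1 * p = r0 + (f r0 - m i) * p.
  have -> : (f r0).-1 = (f r0 - m i) + (m i).-1.
    have := hm_pos i; lia.
  by rewrite mulnDl addnA addnK.
apply/idP/idP.
  move/(@coversP i c (Ordinal (mk_lt h i)) j) => [k hk ->].
  rewrite /= ex -addnA -mulnDl modp_eq // divp_eq // eqxx /=.
  apply/andP; split; lia.
case/andP => /eqP hr /andP[h1 h2].
apply/(@coversP i c (Ordinal (mk_lt h i)) j); exists (j %/ p - (f r0 - m i)).
  lia.
by rewrite /= ex -addnA -mulnDl subnKC // {1}(divn_eq j p) hr addnC.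
Qed.

Lemma T_empty (D : pred nat) : (forall j, j < N -> ~~ D j) -> T D = 1.
Proof.
move=> hD; rewrite /T; apply/eqP/cards1P; exists set0; apply/setP => S; rewrite !inE.
apply/idP/eqP.
  case/andP => /forall_inP hS _; apply/setP => t; rewrite inE; apply/negP => ht.
  move: t ht => [[i c] x] ht.
  have /andP[_ /forallP /(_ x) /implyP hx] := hS _ ht.
  have : covers p m ((i, c, x) : placement v N) x.
    apply/coversP; exists 0; by rewrite ?hm_pos ?addn0.
  by move/hx; rewrite (negbTE (hD x (ltn_ord x))).
move->; apply/andP; split.
  by apply/forall_inP => t; rewrite inE.
by apply/forallP => j; rewrite (negbTE (hD j (ltn_ord j))).
Qed.


Lemma T_prod (s : nat -> nat)
  (hs : forall n, s n = \sum_(i < q | m i <= n) v i * s (n - m i) + (n == 0)) :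
  forall f, (forall j, Dr f j -> j < N) -> T (Dr f) = \prod_(r < p) s (f r).
Proof.
have s0 : s 0 = 1 by rewrite hs big_pred0 // => i; rewrite leqNgt hm_pos.
suff H : forall k (f : nat -> nat), \sum_(r < p) f r < k -> (forall j, Dr f j -> j < N) ->
    T (Dr f) = \prod_(r < p) s (f r).
  by move=> f; apply: H (ltnSn _).
elim=> [//|k IH] f hk hN.
case: (boolP [exists r : 'I_p, 0 < f r]) => [/existsP [r0 hr0] | hall]; last first.
  have hf0 : forall r, r < p -> f r = 0.
    move=> r hr; apply/eqP; rewrite -leqn0 leqNgt; apply/negP => hpos.
    by move/existsP: hall; apply; exists (Ordinal hr).
  rewrite T_empty; last by move=> j _; rewrite /Dr hf0 ?ltn_pmod.
  by rewrite big1 // => r _; rewrite hf0.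
set c0 := r0 + (f r0).-1 * p.
have hD0 : Dr f c0 by rewrite /Dr /c0 modp_eq // divp_eq // ltn_predL.
have hDn : ~~ Dr f (c0 + p).
  by rewrite /Dr /c0 -addnA -mulSnr prednK // modp_eq // divp_eq // ltnn.
have h := hN c0 hD0.
rewrite (removal h hD0 hDn).
pose fi (i : 'I_q) := fun r : nat => if r == r0 then f r0 - m i else f r.
have hadm : forall ic, adm (Dr f) h ic = (ic.2 < v ic.1) && (m ic.1 <= f r0).
  case=> i c; rewrite /adm [(i, c).1]/= [(i, c).2]/=.
  case: (c < v i); last by [].
  rewrite andTb.
  case: (leqP (m i) (f r0)) => hmf.
    have -> : (m i).-1 * p <= c0.
      rewrite /c0 (leq_trans _ (leq_addl _ _)) // leq_mul2r; apply/orP; right; lia.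
    apply/forallP => j; apply/implyP; rewrite (@covers_mk f r0 h i c) //.
    by case/andP => /eqP hr /andP[_ hlt]; rewrite /Dr hr.
  have -> : ((m i).-1 * p <= c0) = false.
    apply/negbTE; rewrite -ltnNge /c0.
    have e : (f r0) * p = (f r0).-1 * p + p by rewrite -mulSnr prednK.
    have : (f r0) * p <= (m i).-1 * p by rewrite leq_mul2r; apply/orP; right; lia.
    have := ltn_ord r0; lia.
  by [].
rewrite (eq_bigl _ _ hadm).
have fi_ne : forall i (r : 'I_p), r != r0 -> fi i r = f r.
  move=> i r hr; rewrite /fi; have -> : (nat_of_ord r == nat_of_ord r0) = false.
    by apply/negbTE; rewrite (inj_eq val_inj).
  by [].
rewrite (eq_bigr (fun ic => \prod_(r < p) s (fi ic.1 r))); last first.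
  case=> i c /andP[hc hmf] /=.
  rewrite /= in hc hmf; rewrite (@T_ext (Dm (Dr f) h (i, c)) (Dr (fi i))); last first.
    move=> j; rewrite /Dm (@covers_mk f r0 h i c) // /Dr /fi.
    case: eqP => [hr|hr].
      rewrite hr andTb.
      case: (leqP (f r0 - m i) (j %/ p)) => h1; case: (ltnP (j %/ p) (f r0)) => h2 //=; lia.
    by rewrite andbT.
  apply: IH.
    have : \sum_(r < p) fi i r < \sum_(r < p) f r.
      rewrite (bigD1 r0) //= [X in _ < X](bigD1 r0) //= {1}/fi eqxx (eq_bigr _ (fi_ne i)) ltn_add2r.
      have := hm_pos i; lia.
    lia.
  move=> j hj; apply: hN; move: hj; rewrite /Dr /fi; case: eqP => [->|_] // hj.
  exact: leq_trans hj (leq_subr _ _).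
rewrite (eq_bigl (fun ic : 'I_q * 'I_(maxcol v) => (m ic.1 <= f r0) && (ic.2 < v ic.1))); last by move=> ic; rewrite andbC.
rewrite -(pair_big_dep (fun i => m i <= f r0) (fun i (c : 'I_(maxcol v)) => c < v i) (fun i _ => \prod_(r < p) s (fi i r))) /=.
rewrite [RHS](bigD1 r0) //= (hs (f r0)).
have -> : (f r0 == 0) = false by rewrite eqn0Ngt hr0.
rewrite addn0 big_distrl /=.
apply: eq_bigr => i hmf.
rewrite -(big_ord_widen (maxcol v) (fun _ => \prod_(r < p) s (fi i r)) (leq_bigmax i)).
rewrite sum_nat_const card_ord (bigD1 r0) //= {1}/fi eqxx mulnA.
by congr (_ * _); apply: eq_bigr => r hr; rewrite fi_ne.
Qed.

End Tilings.

Unset Implicit Arguments.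
Theorem theorem2 (p q : nat) (m v : 'I_q -> nat)
  (hp : (0 < p)%N) (hq : (0 < q)%N)
  (hm_pos : forall i, (0 < m i)%N)
  (hm_incr : forall i j : 'I_q, (i < j)%N -> (m i < m j)%N)
  (hv_pos : forall i, (0 < v i)%N)
  (s : nat -> nat)
  (hs : forall n : nat,
      s n = (\sum_(i < q | (m i <= n)%N) v i * s (n - m i) + (n == 0%N))%N) :
  forall n r : nat, (r < p)%N ->
    A p m v (p * n + r) = (s n ^ (p - r) * s (n.+1) ^ r)%N.
Proof.
move=> n r hr.
set N := p * n + r.
pose f := fun r' : nat => if r' < r then n.+1 else n.
have hreg : forall j, Dr p f j = (j < N).
  move=> j; rewrite /Dr /f /N.
  have hb : j %% p < p := ltn_pmod j hp.
  have ej := divn_eq j p.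
  move: hb ej; set a := j %/ p; set b := j %% p => hb ej.
  rewrite ej; case: ifP => hbr; apply/idP/idP => H; nia.
have hA : A p m v N = T p m v N (Dr p f).
  rewrite /A /T; apply: eq_card => S; rewrite !inE /is_tiling /tiles.
  congr (_ && _).
    apply: eq_forallb => t.
    have -> : [forall j : 'I_N, covers p m t j ==> Dr p f j] = true.
      by apply/forallP => j; rewrite hreg ltn_ord implybT.
    by rewrite andbT.
  by apply: eq_forallb => j; rewrite hreg ltn_ord.
rewrite hA (T_prod hp hm_pos hs); last by move=> j; rewrite hreg.
rewrite -(big_mkord xpredT (fun r' => s (f r'))) (big_cat_nat (leq0n r) (ltnW hr)) /=.
rewrite (@eq_big_nat _ 1 muln 0 r _ (fun _ => s n.+1)); last first.
  by move=> i /andP[_ hi]; rewrite /f hi.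
rewrite (@eq_big_nat _ 1 muln r p _ (fun _ => s n)); last first.
  by move=> i /andP[hi _]; rewrite /f ltnNge hi.
by rewrite !prod_nat_const_nat subn0 mulnC.
Qed.
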